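(* Let $E$ be a bounded spectral family in a $\sigma$-complete orthomodular lattice $\mathbb{L}$. Then the function $f_E:\mathcal{Q}(\mathbb{L})\to\mathbb{R}$, $f_E(\mathfrak{B}):=\inf\{\lambda\in\mathbb{R}\mid E_\lambda\in\mathfrak{B}\}$, is continuous.
   Context: A spectral family in a $\sigma$-complete lattice $\mathbb{L}$ (with $0$ and $1$) is a map $E:\mathbb{R}\to\mathbb{L}$ with (1) $E_\lambda\le E_\mu$ for $\lambda\le\mu$; (2) $E_\lambda=\bigwedge_{\mu>\lambda}E_\mu$; (3) $\bigwedge_\lambda E_\lambda=0$, $\bigvee_\lambda E_\lambda=1$. $E$ is bounded if there are $a\le b$ with $E_\lambda=0$ for $\lambda<a$ and $E_\lambda=1$ for $\lambda\ge b$. A quasipoint of $\mathbb{L}$ is a maximal dual ideal (a dual ideal being a nonempty, upward closed subset not containing $0$ and closed under finite meets). The Stone spectrum $\mathcal{Q}(\mathbb{L})$ is the set of quasipoints with topology generated by the base $\mathcal{Q}_a(\mathbb{L})=\{\mathfrak{B}\mid a\in\mathfrak{B}\}$, $a\in\mathbb{L}$. *)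

(* Defs.v *)
From HB Require Import structures.
From mathcomp Require Import all_boot all_order all_algebra.
From mathcomp Require Import all_classical all_reals all_analysis.
Set Implicit Arguments. Unset Strict Implicit. Unset Printing Implicit Defensive.
Import Order.TTheory GRing.Theory Num.Theory.
Local Open Scope classical_set_scope.
Local Open Scope ring_scope.

Definition is_glb (T : Type) (le : T -> T -> Prop) (S : set T) (x : T) : Prop :=
  (forall y, S y -> le x y) /\ (forall z, (forall y, S y -> le z y) -> le z x).
Definition is_lub (T : Type) (le : T -> T -> Prop) (S : set T) (x : T) : Prop :=
  (forall y, S y -> le y x) /\ (forall z, (forall y, S y -> le y z) -> le x z).

Record SigmaOML := {
  carrier :> Type;
  le : carrier -> carrier -> Prop;
  meet : carrier -> carrier -> carrier;
  join : carrier -> carrier -> carrier;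
  zero : carrier;
  one : carrier;
  orth : carrier -> carrier;
  le_refl : forall a, le a a;
  le_antisym : forall a b, le a b -> le b a -> a = b;
  le_trans : forall a b c, le a b -> le b c -> le a c;
  meet_glb : forall a b, is_glb le [set x | x = a \/ x = b] (meet a b);
  join_lub : forall a b, is_lub le [set x | x = a \/ x = b] (join a b);
  zero_le : forall a, le zero a;
  le_one : forall a, le a one;
  orth_invol : forall a, orth (orth a) = a;
  orth_anti : forall a b, le a b -> le (orth b) (orth a);
  meet_orth : forall a, meet a (orth a) = zero;
  join_orth : forall a, join a (orth a) = one;
  orthomodular : forall a b, le a b -> b = join a (meet b (orth a));
  sigma_glb : forall s : nat -> carrier, exists x, is_glb le (range s) x;
  sigma_lub : forall s : nat -> carrier, exists x, is_lub le (range s) x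
}.

Section Defs.
Variable L : SigmaOML.
Variable R : realType.

Definition spectral_family (E : R -> L) : Prop :=
  (forall l m, l <= m -> le (E l) (E m)) /\
  (forall l, is_glb (@le L) [set E m | m in [set m | l < m]] (E l)) /\
  is_glb (@le L) (range E) (zero L) /\
  is_lub (@le L) (range E) (one L).

Definition bounded_spectral_family (E : R -> L) : Prop :=
  spectral_family E /\
  exists a b : R, a <= b /\ (forall l, l < a -> E l = zero L) /\
                  (forall l, b <= l -> E l = one L).

Definition dual_ideal (D : set L) : Prop :=
  (exists a, D a) /\
  (forall a b, D a -> le a b -> D b) /\
  ~ D (zero L) /\
  (forall a b, D a -> D b -> D (meet a b)).

Definition is_quasipoint (B : set L) : Prop :=
  dual_ideal B /\ (forall D, dual_ideal D -> B `<=` D -> D = B).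

Definition quasipoint := {B : set L | is_quasipoint B}.

(* Open sets of the Stone spectrum: the topology generated by the base
   Q_a = {B | a \in B}. *)
Definition stone_open (U : set quasipoint) : Prop :=
  forall B, U B -> exists a : L, proj1_sig B a /\
    (forall B' : quasipoint, proj1_sig B' a -> U B').

Definition f_E (E : R -> L) (B : quasipoint) : R :=
  inf [set l | proj1_sig B (E l)].

End Defs.

(* Main.v *)
Require Import Defs.
From mathcomp Require Import all_boot all_order all_algebra.
From mathcomp Require Import all_classical all_reals all_analysis.
From mathcomp Require Import lra.
Import Order.TTheory GRing.Theory Num.Theory.
Import numFieldTopology.Exports numFieldNormedType.Exports.
Local Open Scope classical_set_scope.
Local Open Scope ring_scope.

Lemma mle1 (L : SigmaOML) (a b : L) : Defs.le (Defs.meet a b) a.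
Proof. by case: (meet_glb a b) => H _; apply: H; left. Qed.
Lemma mle2 (L : SigmaOML) (a b : L) : Defs.le (Defs.meet a b) b.
Proof. by case: (meet_glb a b) => H _; apply: H; right. Qed.
Lemma mmax (L : SigmaOML) (a b c : L) : Defs.le c a -> Defs.le c b -> Defs.le c (Defs.meet a b).
Proof. by case: (meet_glb a b) => _ H ca cb; apply: H => y [->|->]. Qed.

Lemma qp_disj (L : SigmaOML) (B : set L) (a : L) : is_quasipoint B -> ~ B a ->
  exists y, B y /\ Defs.meet y a = Defs.zero L.
Proof.
move=> [[[x Bx] [Bup [B0 Bm]]] Bmax] Ba.
apply: contrapT => Hn; apply: Ba.
pose D := [set z | exists y, B y /\ Defs.le (Defs.meet y a) z].
have DB : B `<=` D by move=> y By; exists y; split => //; apply: mle1.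
have dD : dual_ideal D.
  split; first by exists (Defs.meet x a), x; split => //; apply: Defs.le_refl.
  split; first by move=> u v [y [By H]] uv; exists y; split => //; apply: Defs.le_trans uv.
  split.
    move=> [y [By H]]; apply: Hn; exists y; split => //.
    by apply: Defs.le_antisym => //; apply: Defs.zero_le.
  move=> u v [y1 [B1 H1]] [y2 [B2 H2]]; exists (Defs.meet y1 y2); split; first exact: Bm.
  apply: mmax.
    apply: Defs.le_trans _ H1; apply: mmax; last exact: mle2.
    exact: Defs.le_trans (mle1 _ _ _) (mle1 _ _ _).
  apply: Defs.le_trans _ H2; apply: mmax; last exact: mle2.
  exact: Defs.le_trans (mle1 _ _ _) (mle2 _ _ _).
have <- := Bmax D dD DB.
by exists x; split => //; apply: mle2.
Qed.

Theorem proposition2p8 (L : SigmaOML) (R : realType) (E : R -> L) :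
  bounded_spectral_family E ->
  forall V : set R, open V -> stone_open (f_E E @^-1` V).
Proof.
move=> [[Emon _] [a [b [ab [Ea Eb]]]]] V Vo [B qB] /= VB.
have [[[x0 Bx0] [Bup [B0 Bm]]] _] := qB.
set l0 := f_E E (exist _ B qB) in VB.
move: (Vo _ VB) => /nbhs_ballP [e e0 He].
pose mu := l0 - e / 2. pose nu := l0 + e / 2.
have e20 : 0 < e / 2 by rewrite divr_gt0.
have nEmu : ~ B (E mu).
  move=> Bmu.
  have : l0 <= mu.
    apply: ge_inf => //; exists a => l /= Bl; rewrite leNgt; apply/negP => la.
    by apply: B0; rewrite -(Ea _ la).
  rewrite /mu; lra.
have Enu : B (E nu).
  have ne : [set l | B (E l)] !=set0.
    exists b => /=; rewrite Eb; last exact: lexx.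
    by apply: Bup Bx0 _; apply: Defs.le_one.
  have l0nu : l0 < nu by rewrite /nu; lra.
  have [l Bl lnu] := inf_lt ne l0nu.
  apply: Bup Bl _; apply: Emon; exact: ltW.
have [y [By ymu]] := qp_disj _ _ _ qB nEmu.
exists (Defs.meet y (E nu)); split; first exact: Bm.
move=> [B' qB'] /= B'c.
have [[[x1 Bx1] [Bup' [B0' Bm']]] _] := qB'.
have B'y : B' y by apply: Bup' B'c _; apply: mle1.
have B'nu : B' (E nu) by apply: Bup' B'c _; apply: mle2.
have lbmu : lbound [set l | B' (E l)] mu.
  move=> l /= Bl; rewrite leNgt; apply/negP => lmu.
  apply: B0'; rewrite -ymu; apply: Bm' => //.
  apply: Bup' Bl _; apply: Emon; exact: ltW.
apply: He.
set f := f_E E _.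
have h1 : mu <= f by apply: lb_le_inf => //; exists nu.
have h2 : f <= nu by apply: ge_inf => //; exists mu.
rewrite -ball_normE /= ltr_norml.
apply/andP; split; rewrite /mu /nu in h1 h2; lra.
Qed.
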